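(* Assume (RHS.1), (RHS.2), (BC.1), (BC.2), and, if (RHS.2b) holds, that condition (M.1) holds. If $u_{\mathfrak h}\in\mathbb V_h$ solves the discrete problem, then $$\|u_{\mathfrak h}\|_{L^\infty(\Omega_h)}\le C\|f\|_{L^\infty(\Omega_h)}+\max_{z\in\mathcal N_h^b}|\tilde g_\varepsilon(z)|,$$ where $C$ depends only on $\Omega$ and is independent of $\mathfrak h=(h,\varepsilon,\theta)$.
   Context: Setting: $\Omega\subset\mathbb R^d$ ($d\ge1$) is a bounded domain with continuous boundary. For $r>0$, $\Omega^{(r)}=\{x\in\Omega:\operatorname{dist}(x,\partial\Omega)>r\}$. $\{\mathcal T_h\}_{h>0}$ is a family of meshes of closed simplices, $h=\max_T\operatorname{diam}T$, $\Omega_h$ the interior of the union of the simplices, with $\Omega^{(h)}\subset\Omega_h\subset\Omega$; $\mathcal N_h$ the set of vertices. $\mathbb V_h$: continuous piecewise linear functions on $\mathcal T_h$, hat basis $\{\hat\varphi_z\}$, Lagrange interpolant $\mathcal I_h$. Parameters $\mathfrak h=(h,\varepsilon,\theta)$, $\varepsilon\in[h,\operatorname{diam}\Omega]$, $0<\theta\le1$. $\mathcal N_h^I=\mathcal N_h\cap\Omega^{(2\varepsilon)}$, $\mathcal N_h^b=\mathcal N_h\setminus\mathcal N_h^I$. $\mathbb S_\theta$: finite symmetric subset of the unit sphere $\mathbb S$ such that each $v\in\mathbb S$ has $v_\theta\in\mathbb S_\theta$ with $|v-v_\theta|\le\theta$. For $z\in\mathcal N_h^I$: $\mathcal N_{\mathfrak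 h}(z)=\{z\}\cup\{z+\varepsilon v_\theta:v_\theta\in\mathbb S_\theta\}$, $-\Delta^\diamond_{\infty,\mathfrak h}w(z)=\varepsilon^{-2}\big(2w(z)-\max_{x\in\mathcal N_{\mathfrak h}(z)}\mathcal I_hw(x)-\min_{x\in\mathcal N_{\mathfrak h}(z)}\mathcal I_hw(x)\big)$, $\widetilde{\mathcal N}_{\mathfrak h}(z)=\{z\}\cup\{z'\in\mathcal N_h:\exists v_\theta\in\mathbb S_\theta,\ \hat\varphi_{z'}(z+\varepsilon v_\theta)>0\}$. Assumptions: (RHS.1) $f\in C(\Omega)\cap L^\infty(\Omega)$. (RHS.2) either (RHS.2a) $\sup_\Omega f<0$ or $\inf_\Omega f>0$, or (RHS.2b) $f\equiv0$. (BC.1) $g\in C(\partial\Omega)$. (BC.2) for every $\varepsilon>0$ a function $\tilde g_\varepsilon\in C(\overline\Omega)$ is given such that, if $g\in C^{0,\alpha}(\partial\Omega)$ for some $\alpha\in[0,1]$, then $\tilde g_\varepsilon\in C^{0,\alpha}(\overline\Omega)$ and $\|g-\tilde g_\varepsilon\|_{L^\infty(\partial\Omega)}\le C\varepsilon^\alpha$. (M.1) for every nonempty $S\subset\mathcal N_h^I$ there are $z\in S$, $z'\in\mathcal N_h\setminus S$ with $z'\in\widetilde{\mathcal N}_{\mathfrak h}(z)$. Discrete problem: find $u_{\mathfrak h}\in\mathbb V_h$ with $-\Delta^\diamond_{\infty,\mathfrak h}u_{\mathfrak h}(z)=f(z)$ for $z\in\mathcal N_h^I$ and $u_{\mathfrak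 h}(z)=\tilde g_\varepsilon(z)$ for $z\in\mathcal N_h^b$. *)

(* Defs.v *)
From HB Require Import structures.
From mathcomp Require Import all_boot all_order all_algebra.
From mathcomp Require Import all_classical all_reals all_analysis.

Set Implicit Arguments.
Unset Strict Implicit.
Unset Printing Implicit Defensive.

Import Order.TTheory GRing.Theory Num.Theory.
Import numFieldNormedType.Exports.

Local Open Scope classical_set_scope.
Local Open Scope ring_scope.

Section Defs.
Variables (R : realType) (d : nat).

Definition pt := 'rV[R]_d.

Definition enorm (x : pt) : R := Num.sqrt (\sum_(i < d) x ord0 i ^+ 2).

Definition bdry (A : set pt) : set pt := closure A `\` interior A.

Definition dist_bdry (Om : set pt) (x : pt) : R :=
  inf [set enorm (x - y) | y in bdry Om].

Definition Om_in (Om : set pt) (r : R) : set pt :=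
  [set x | Om x /\ r < dist_bdry Om x].

Definition diam (A : set pt) : R :=
  sup [set r | exists x y, A x /\ A y /\ r = enorm (x - y)].

Definition bounded_domain (Om : set pt) : Prop :=
  Om !=set0 /\ open Om /\ connected Om /\
  exists M : R, forall x, Om x -> enorm x <= M.

(** Continuous boundary: near every boundary point, after a rigid rotation,
    Omega is the strict subgraph of a continuous function of the other
    d-1 coordinates. *)
Definition continuous_boundary (Om : set pt) : Prop :=
  forall x0, bdry Om x0 ->
  exists (r : R) (Q : 'M[R]_d) (k : 'I_d) (gam : pt -> R),
    0 < r /\ Q *m Q^T = 1%:M /\ continuous gam /\
    (forall y y' : pt, (forall j, j != k -> y ord0 j = y' ord0 j) -> gam y = gam y') /\
    (forall x, enorm (x - x0) < r ->
       (Om x <-> ((x - x0) *m Q) ord0 k < gam ((x - x0) *m Q))).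

(** Hoelder space C^{0,alpha}(S) (alpha = 0: bounded continuous). *)
Definition holder (alpha : R) (S : set pt) (g : pt -> R) : Prop :=
  {within S, continuous g} /\
  exists L : R, forall x y, S x -> S y -> `|g x - g y| <= L * (enorm (x - y)) `^ alpha.

Definition simplex := {ffun 'I_d.+1 -> pt}.

Definition barycentric (l : 'I_d.+1 -> R) : Prop :=
  (forall i, 0 <= l i) /\ \sum_i l i = 1.

Definition subhull (T : simplex) (P : 'I_d.+1 -> bool) : set pt :=
  [set x | exists l, barycentric l /\ (forall i, ~~ P i -> l i = 0) /\
                     x = \sum_i l i *: T i].

Definition hull (T : simplex) : set pt := subhull T (fun _ => true).

Definition affinely_independent (T : simplex) : Prop :=
  forall c : 'I_d.+1 -> R, \sum_i c i = 0 -> \sum_i c i *: T i = 0 ->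
    forall i, c i = 0.

Definition is_mesh (M : seq simplex) : Prop :=
  (forall T, T \in M -> affinely_independent T) /\
  (forall T T', T \in M -> T' \in M ->
     hull T `&` hull T' = subhull T (fun i => T i \in [seq T' j | j <- enum 'I_d.+1])).

Definition meshsize (M : seq simplex) : R :=
  \big[Num.max/0]_(T <- M) \big[Num.max/0]_(i < d.+1) \big[Num.max/0]_(j < d.+1)
     enorm (T i - T j).

Definition Om_h (M : seq simplex) : set pt :=
  interior [set x | exists T, T \in M /\ hull T x].

Definition nodes (M : seq simplex) : seq pt :=
  undup (flatten [seq [seq T i | i <- enum 'I_d.+1] | T : simplex <- M]).
Definition Nh (M : seq simplex) : set pt := [set z | z \in nodes M].

(** V_h: functions that are affine on every simplex of the mesh
    (hence continuous piecewise linear on the closure of Omega_h;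
    values outside the mesh are irrelevant). *)
Definition Vh (M : seq simplex) (w : pt -> R) : Prop :=
  forall T, T \in M -> forall l, barycentric l ->
    w (\sum_i l i *: T i) = \sum_i l i * w (T i).

Definition hat_basis (M : seq simplex) (hat : pt -> pt -> R) : Prop :=
  forall z, Nh M z -> Vh M (hat z) /\
    forall z', Nh M z' -> hat z z' = (z' == z)%:R.

Definition interp (M : seq simplex) (hat : pt -> pt -> R) (w : pt -> R) : pt -> R :=
  fun x => \sum_(z <- nodes M) w z * hat z x.

Definition is_Stheta (theta : R) (S : seq pt) : Prop :=
  (forall v, v \in S -> enorm v = 1) /\
  (forall v, v \in S -> - v \in S) /\
  (forall v : pt, enorm v = 1 -> exists2 w, w \in S & enorm (v - w) <= theta).

Definition NhI (Om : set pt) (M : seq simplex) (eps : R) : set pt :=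
  Nh M `&` Om_in Om (2 * eps).

Definition disc_inf_lap (M : seq simplex) (hat : pt -> pt -> R) (eps : R)
    (S : seq pt) (w : pt -> R) (z : pt) : R :=
  let Iw := interp M hat w in
  eps ^-2 * (2 * w z
             - \big[Num.max/Iw z]_(v <- S) Iw (z + eps *: v)
             - \big[Num.min/Iw z]_(v <- S) Iw (z + eps *: v)).

Definition Ntilde (M : seq simplex) (hat : pt -> pt -> R) (eps : R)
    (S : seq pt) (z : pt) : set pt :=
  [set z] `|` [set z' | Nh M z' /\
                exists2 v, v \in S & 0 < hat z' (z + eps *: v)].

Definition cond_M1 (Om : set pt) (M : seq simplex) (hat : pt -> pt -> R)
    (eps : R) (S : seq pt) : Prop :=
  forall Sn : set pt, Sn `<=` NhI Om M eps -> Sn !=set0 ->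
    exists z z', Sn z /\ (Nh M `\` Sn) z' /\ Ntilde M hat eps S z z'.

End Defs.

(* Main.v *)
Require Import Defs.
From HB Require Import structures.
From mathcomp Require Import all_boot all_order all_algebra.
From mathcomp Require Import all_classical all_reals all_analysis.
From mathcomp Require Import ring lra.
Import Order.TTheory GRing.Theory Num.Theory.
Import numFieldNormedType.Exports.
Local Open Scope classical_set_scope.
Local Open Scope ring_scope.

Definition qn {R : realType} {d} (x : 'rV[R]_d) : R := \sum_(i < d) x ord0 i ^+ 2.
Definition ip {R : realType} {d} (x y : 'rV[R]_d) : R := \sum_(i < d) x ord0 i * y ord0 i.

Section Alg.
Context {R : realType} {d : nat}.
Implicit Types (x y a v : 'rV[R]_d).

Lemma qn_ge0 x : 0 <= qn x.
Proof. by apply: sumr_ge0 => i _; exact: sqr_ge0. Qed.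

Lemma enorm_ge0 x : 0 <= enorm x.
Proof. exact: sqrtr_ge0. Qed.

Lemma enorm_sq x : enorm x ^+ 2 = qn x.
Proof. by rewrite /enorm sqr_sqrtr // qn_ge0. Qed.

Lemma qn_addZ a v (s : R) : qn (a + s *: v) = qn a + 2 * s * ip a v + s ^+ 2 * qn v.
Proof.
rewrite /qn /ip mulr_sumr mulr_sumr -!big_split /=; apply: eq_bigr => i _.
rewrite !mxE; ring.
Qed.

Lemma qnN x : qn (- x) = qn x.
Proof. by apply: eq_bigr => i _; rewrite mxE sqrrN. Qed.

Lemma cs a v : qn v = 1 -> ip a v ^+ 2 <= qn a.
Proof.
move=> qv; have := qn_ge0 (a + (- ip a v) *: v).
rewrite qn_addZ qv; lra.
Qed.

Lemma enorm_addZ a v (s : R) : qn v = 1 -> 0 <= s -> enorm a - s <= enorm (a + s *: v).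
Proof.
move=> qv s0.
have e0 := enorm_ge0 (a + s *: v); have n0 := enorm_ge0 a.
have E1 := enorm_sq (a + s *: v); have E2 := enorm_sq a.
rewrite qn_addZ qv -E2 in E1.
have := cs a v qv; rewrite -E2 => C.
have hip : - enorm a <= ip a v.
  rewrite lerNl; apply: contraTT C => H; rewrite -ltNge.
  have H' : enorm a < - ip a v by rewrite ltNge.
  nra.
rewrite leNgt; apply/negP => H.
nra.
Qed.

Lemma qn_add2 a b : qn (a + b) <= 2 * qn a + 2 * qn b.
Proof.
rewrite /qn !mulr_sumr -big_split /=; apply: ler_sum => i _.
rewrite mxE; have := sqr_ge0 (a ord0 i - b ord0 i); nra.
Qed.

Lemma jensen1 (I : finType) (l : I -> R) (f : I -> R) :
  (forall i, 0 <= l i) -> \sum_i l i = 1 ->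
  (\sum_i l i * f i) ^+ 2 <= \sum_i l i * f i ^+ 2.
Proof.
move=> l0 l1; set m := \sum_i l i * f i.
have E0 : forall m0, \sum_i l i * (f i - m0) ^+ 2 =
   \sum_i l i * f i ^+ 2 - 2 * m0 * (\sum_i l i * f i) + m0 ^+ 2 * \sum_i l i.
  move=> m0; rewrite !mulr_sumr -sumrB -big_split /=; apply: eq_bigr => i _; ring.
have E := E0 m.
have : 0 <= \sum_i l i * (f i - m) ^+ 2.
  by apply: sumr_ge0 => i _; apply: mulr_ge0 => //; exact: sqr_ge0.
rewrite E l1 -/m; lra.
Qed.

Lemma qn_jensen (l : 'I_d.+1 -> R) (T : 'I_d.+1 -> 'rV[R]_d) :
  barycentric l -> qn (\sum_i l i *: T i) <= \sum_i l i * qn (T i).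
Proof.
move=> [l0 l1].
rewrite /qn.
under eq_bigr => k _ do rewrite summxE.
under [X in _ <= X]eq_bigr => i _ do rewrite mulr_sumr.
rewrite exchange_big /=; apply: ler_sum => k _.
under eq_bigr => i _ do rewrite mxE.
exact: jensen1.
Qed.

End Alg.

Section Big.
Context {R : realType} {d : nat}.

Lemma sum_delta (s : seq 'rV[R]_d) (W : 'rV[R]_d -> R) x :
  x \in s -> uniq s -> \sum_(z <- s) W z * (x == z)%:R = W x.
Proof.
move=> xs us; rewrite (bigD1_seq x) //= eqxx mulr1 big1 ?addr0 // => z.
by rewrite eq_sym => /negbTE ->; rewrite mulr0.
Qed.

Lemma node_mem (M : seq (simplex R d)) T i : T \in M -> T i \in nodes M.
Proof.
move=> TM; rewrite /nodes mem_undup; apply/flattenP.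
exists [seq T j | j <- enum 'I_d.+1]; first by apply/mapP; exists T.
by apply/mapP; exists i => //; rewrite mem_enum.
Qed.

Lemma interp_node M hat (W : 'rV[R]_d -> R) z :
  hat_basis M hat -> z \in nodes M -> interp M hat W z = W z.
Proof.
move=> hb zN; rewrite /interp (eq_big_seq (fun z' => W z' * (z == z')%:R)).
  by rewrite sum_delta // undup_uniq.
by move=> z' z'N; rewrite ((hb z' z'N).2 z zN).
Qed.

Lemma interp_hull M hat (W : 'rV[R]_d -> R) T l :
  hat_basis M hat -> T \in M -> barycentric l ->
  interp M hat W (\sum_i l i *: T i) = \sum_i l i * W (T i).
Proof.
move=> hb TM bl.
rewrite /interp (eq_big_seq (fun z => \sum_i W z * (l i * (T i == z)%:R))).
  rewrite exchange_big /=; apply: eq_bigr => i _.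
  under eq_bigr => z _ do rewrite mulrCA.
  by rewrite -mulr_sumr sum_delta ?undup_uniq //; exact: node_mem.
move=> z zN; rewrite ((hb z zN).1 T TM l bl) mulr_sumr; apply: eq_bigr => i _.
by rewrite ((hb z zN).2 (T i) (node_mem M T i TM)).
Qed.

Lemma big_max_le (I : eqType) (s : seq I) (F : I -> R) x0 K :
  x0 <= K -> (forall v, v \in s -> F v <= K) -> \big[Num.max/x0]_(v <- s) F v <= K.
Proof.
move=> x0K; elim: s => [|a s IH] H; first by rewrite big_nil.
rewrite big_cons ge_max H ?mem_head //= IH // => v vs; apply: H.
by rewrite inE vs orbT.
Qed.

Lemma big_min_le (I : eqType) (s : seq I) (F : I -> R) x0 v :
  v \in s -> \big[Num.min/x0]_(w <- s) F w <= F v.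
Proof.
elim: s => [|a s IH] //; rewrite inE big_cons ge_min => /orP[/eqP->|vs].
  by rewrite lexx.
by rewrite IH ?orbT.
Qed.

Lemma oppr_min' (x y : R) : - Num.min x y = Num.max (- x) (- y).
Proof.
rewrite minEle maxEle lerN2; case: (ltgtP x y) => //.
by move=> ->.
Qed.

Lemma big_max_opp (I : Type) (s : seq I) (F : I -> R) a :
  \big[Num.max/ - a]_(v <- s) (- F v) = - \big[Num.min/a]_(v <- s) F v.
Proof.
elim: s => [|b s IH]; first by rewrite !big_nil.
by rewrite !big_cons IH oppr_min'.
Qed.

Lemma argmax_seq (I : eqType) (s : seq I) (F : I -> R) :
  s != [::] -> exists2 x, x \in s & forall y, y \in s -> F y <= F x.
Proof.
elim: s => [|a s IH] // _.
case: (eqVneq s [::]) => [->|sn].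
  by exists a; rewrite ?mem_head // => y; rewrite inE => /eqP->.
have [x xs Hx] := IH sn.
case: (leP (F a) (F x)) => H.
  exists x; first by rewrite inE xs orbT.
  by move=> y; rewrite inE => /orP[/eqP->|/Hx].
exists a; first exact: mem_head.
move=> y; rewrite inE => /orP[/eqP->//|/Hx Hy]; exact: (le_trans Hy (ltW H)).
Qed.

End Big.

Lemma ipN (R : realType) d (z v : 'rV[R]_d) : ip z (- v) = - ip z v.
Proof. by rewrite /ip -sumrN; apply: eq_bigr => i _; rewrite mxE mulrN. Qed.

Lemma core (R : realType) d (Om : set 'rV[R]_d) (M : seq (simplex R d)) hat eps
  (S : seq 'rV[R]_d) (U : 'rV[R]_d -> R) (c G P : R) :
  hat_basis M hat -> 0 < eps -> 0 < c -> 0 <= P ->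
  (forall v, v \in S -> qn v = 1) -> (forall v, v \in S -> - v \in S) -> S != [::] ->
  (forall z, NhI Om M eps z -> qn z <= P /\ forall v, v \in S -> exists T, T \in M /\
      exists l, barycentric l /\ z + eps *: v = \sum_i l i *: T i /\ (forall i, qn (T i) <= P)) ->
  (forall z, NhI Om M eps z -> disc_inf_lap M hat eps S U z < c) ->
  (forall z, z \in nodes M -> ~ NhI Om M eps z -> U z <= G) ->
  forall z, z \in nodes M -> U z <= G + c * P.
Proof.
move=> hb e0 c0 P0 Sq Ssym Sn Hgeo Heq Hbd z zN.
pose psi (x : 'rV[R]_d) := Num.min (qn x) P.
have psi0 (x : 'rV[R]_d) : 0 <= psi x by rewrite /psi le_min qn_ge0 P0.
have psiP (x : 'rV[R]_d) : psi x <= P by rewrite /psi ge_min lexx orbT.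
have psiq (x : 'rV[R]_d) : qn x <= P -> psi x = qn x by move=> h; rewrite /psi (min_idPl h).
pose D (x : 'rV[R]_d) := U x + c * psi x.
have nN : nodes M != [::] by apply: contraTneq zN => ->.
have [zs zsN zsmax] := @argmax_seq _ _ _ D nN.
suff H : D zs <= G + c * P.
  apply: le_trans H; apply: le_trans (zsmax z zN).
  by rewrite /D lerDl mulr_ge0 // ltW.
case: (pselect (NhI Om M eps zs)) => [Iz|nIz]; last first.
  by rewrite /D lerD ?Hbd // ler_wpM2l // ltW.
exfalso.
have [qz Hv] := Hgeo zs Iz.
have key : forall v, v \in S ->
    interp M hat U (zs + eps *: v) <= U zs - c * (2 * eps * ip zs v + eps ^+ 2).
  move=> v vS; have [T [TM [l [bl [ye qT]]]]] := Hv v vS.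
  have Ey : qn (zs + eps *: v) = qn zs + 2 * eps * ip zs v + eps ^+ 2.
    by rewrite qn_addZ (Sq v vS) mulr1.
  have J := qn_jensen l T bl; rewrite -ye Ey in J.
  rewrite ye interp_hull //.
  apply: (@le_trans _ _ (\sum_i l i * (D zs - c * qn (T i)))).
    apply: ler_sum => i _; apply: ler_wpM2l; first exact: bl.1.
    have := zsmax (T i) (node_mem M T i TM); rewrite /D psiq //; lra.
  have -> : \sum_i l i * (D zs - c * qn (T i)) = D zs - c * \sum_i l i * qn (T i).
    have E : D zs = \sum_i l i * D zs by rewrite -mulr_suml bl.2 mul1r.
    rewrite [X in _ = X - _]E mulr_sumr -sumrB; apply: eq_bigr => i _; ring.
  rewrite /D psiq //.
  have := ler_wpM2l (ltW c0) J; lra.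
have node : interp M hat U zs = U zs by exact: interp_node.
have [v0 v0S v0max] := @argmax_seq _ _ _ (ip zs) Sn.
set m := ip zs v0 in v0max.
have m0 : 0 <= m by have := v0max (- v0) (Ssym v0 v0S); rewrite ipN -/m; lra.
have lowb v : v \in S -> - m <= ip zs v.
  by move=> vS; have := v0max (- v) (Ssym v vS); rewrite ipN; lra.
have ce : 0 < c * eps by exact: mulr_gt0.
have Hmax : \big[Num.max/interp M hat U zs]_(v <- S) interp M hat U (zs + eps *: v)
    <= Num.max (U zs) (U zs - c * (eps ^+ 2 - 2 * eps * m)).
  apply: big_max_le; first by rewrite node le_max lexx.
  move=> v vS; rewrite le_max; apply/orP; right; apply: le_trans (key v vS) _.
  have h0 : 0 <= ip zs v + m by have := lowb v vS; lra.
  have h := mulr_ge0 (ltW ce) h0.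
  nra.
have Hmin : \big[Num.min/interp M hat U zs]_(v <- S) interp M hat U (zs + eps *: v)
    <= U zs - c * (2 * eps * m + eps ^+ 2).
  exact: le_trans (@big_min_le _ _ _ _ _ _ v0S) (key v0 v0S).
have := Heq zs Iz; rewrite /disc_inf_lap /=.
set MAX := \big[Num.max/_]_(v <- S) _ in Hmax *.
set MIN := \big[Num.min/_]_(v <- S) _ in Hmin *.
have cm : 0 <= c * eps * m by apply: mulr_ge0 => //; exact: ltW.
have ce2 : 0 <= c * eps ^+ 2 by apply: mulr_ge0; [exact: ltW | exact: sqr_ge0].
have H2 : c * eps ^+ 2 <= 2 * U zs - MAX - MIN.
  move: Hmax; rewrite maxEle; case: ifP => _ Hmax; nra.
have : c <= eps ^-2 * (2 * U zs - MAX - MIN).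
  have e2 : 0 < eps ^+ 2 by exact: exprn_gt0.
  have -> : c = eps ^-2 * (c * eps ^+ 2) by rewrite mulrCA mulVf ?mulr1 // gt_eqF.
  by apply: ler_wpM2l => //; rewrite invr_ge0 ltW.
lra.
Qed.
Lemma seg_in (R : realType) d (Om : set 'rV[R]_d) (z w : 'rV[R]_d) :
  open Om -> Om z -> (forall t : R, 0 <= t -> t <= 1 -> ~ bdry Om (z + t *: w)) -> Om (z + w).
Proof.
move=> oO Oz nb.
pose f := fun t : R => z + t *: w.
have cf : continuous f.
  move=> t.
  have h1 : {for t, continuous (fun _ : R => z)} by exact: cst_continuous.
  have h2 : {for t, continuous (fun s : R => s *: w)}.
    by apply: continuousZr_tmp; by move=> ?.
  exact: (continuousD h1 h2).
have cX : connected (f @` `[0, 1]).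
  apply: connected_continuous_connected; last exact: continuous_subspaceT.
  apply/connected_intervalP; exact: interval_is_interval.
have H := cX (f @` `[0, 1] `&` Om).
have HH : f @` `[0, 1] `&` Om = f @` `[0, 1].
  apply: H.
  - exists z; split => //; exists 0; first by rewrite /= in_itv /= lexx ler01.
    by rewrite /f scale0r addr0.
  - by exists Om.
  - exists (closure Om); first exact: closed_closure.
    apply/seteqP; split => x [Xx Ox]; split => //; first exact: subset_closure.
    case: Xx => t; rewrite /= in_itv /= => /andP[t0 t1] ftx.
    rewrite -ftx in Ox *.
    apply: contrapT => nO; apply: (nb t t0 t1); split => //.
    by rewrite (proj1 (interior_id Om) oO).
have : (f @` `[0, 1]) (z + w).
  exists 1; first by rewrite /= in_itv /= ler01 lexx.
  by rewrite /f scale1r.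
by rewrite -HH => -[].
Qed.

Lemma oppr_max' (R : realType) (x y : R) : - Num.max x y = Num.min (- x) (- y).
Proof.
rewrite minEle maxEle lerN2; case: (ltgtP x y) => //.
by move=> ->.
Qed.

Lemma big_min_opp (R : realType) (I : Type) (s : seq I) (F : I -> R) a :
  \big[Num.min/ - a]_(v <- s) (- F v) = - \big[Num.max/a]_(v <- s) F v.
Proof.
elim: s => [|b s IH]; first by rewrite !big_nil.
by rewrite !big_cons IH oppr_max'.
Qed.

Lemma disc_opp (R : realType) d M hat eps (S : seq 'rV[R]_d) (u : 'rV[R]_d -> R) z :
  disc_inf_lap M hat eps S (fun x => - u x) z = - disc_inf_lap M hat eps S u z.
Proof.
rewrite /disc_inf_lap /=.
have -> : interp M hat (fun x => - u x) = fun y => - interp M hat u y.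
  by apply: funext => y; rewrite /interp -sumrN; apply: eq_bigr => w _; rewrite mulNr.
rewrite big_max_opp big_min_opp; ring.
Qed.

Lemma enorm0 (R : realType) d : enorm (0 : 'rV[R]_d) = 0.
Proof. by rewrite /enorm big1 ?sqrtr0 // => i _; rewrite mxE expr0n. Qed.

Theorem lemma3p4 (R : realType) (d : nat) (Om : set 'rV[R]_d) :
  (0 < d)%N -> bounded_domain Om -> continuous_boundary Om ->
  exists C : R,
  forall (M : seq (simplex R d)) (h eps theta : R) (S : seq 'rV[R]_d)
         (hat : 'rV[R]_d -> 'rV[R]_d -> R)
         (f g : 'rV[R]_d -> R) (gt : R -> 'rV[R]_d -> R) (u : 'rV[R]_d -> R),
  (* mesh *)
  is_mesh M -> 0 < h -> h = meshsize M ->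
  Om_in Om h `<=` Om_h M -> Om_h M `<=` Om ->
  hat_basis M hat ->
  (* parameters *)
  h <= eps -> eps <= diam Om -> 0 < theta -> theta <= 1 -> is_Stheta theta S ->
  (* (RHS.1) *)
  {within Om, continuous f} -> (exists B : R, forall x, Om x -> `|f x| <= B) ->
  (* (RHS.2) *)
  ((sup [set f x | x in Om] < 0 \/ 0 < inf [set f x | x in Om])
     \/ (forall x, Om x -> f x = 0)) ->
  (* (BC.1) *)
  {within bdry Om, continuous g} ->
  (* (BC.2) *)
  (forall e, 0 < e -> {within closure Om, continuous (gt e)}) ->
  (forall alpha, 0 <= alpha -> alpha <= 1 -> holder alpha (bdry Om) g ->
     (forall e, 0 < e -> holder alpha (closure Om) (gt e)) /\
     exists Cg : R, forall e, 0 < e -> forall x, bdry Om x ->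
       `|g x - gt e x| <= Cg * e `^ alpha) ->
  (* (M.1) in case (RHS.2b) *)
  ((forall x, Om x -> f x = 0) -> cond_M1 Om M hat eps S) ->
  (* u solves the discrete problem *)
  Vh M u ->
  (forall z, NhI Om M eps z -> disc_inf_lap M hat eps S u z = f z) ->
  (forall z, (Nh M `\` NhI Om M eps) z -> u z = gt eps z) ->
  forall x, Om_h M x ->
    `|u x| <= C * sup [set `|f y| | y in Om_h M]
              + \big[Num.max/0]_(z <- nodes M | z \notin NhI Om M eps) `|gt eps z|.
Proof.
move=> d0 [[x0 Ox0] [oO [_ [Mb HMb]]]] _.
have Mb0 : 0 <= Mb := le_trans (enorm_ge0 x0) (HMb x0 Ox0).
exists (10 * Mb ^+ 2).
set P := 10 * Mb ^+ 2.
have P0 : 0 <= P by rewrite /P mulr_ge0 // sqr_ge0.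
move=> M h eps theta S hat f g gt u _ h0 hE sub1 sub2 hb he ed _ _ [Sunit [Ssym Sdense]]
  _ [B HB] _ _ _ _ _ Vu Heq Hbd x xOh.
set F := sup [set `|f y| | y in Om_h M].
set G := \big[Num.max/0]_(z <- nodes M | z \notin NhI Om M eps) `|gt eps z|.
have eps0 : 0 < eps := lt_le_trans h0 he.
have Fub : forall y, Om_h M y -> `|f y| <= F.
  move=> y yO; apply: ub_le_sup; last by exists y.
  by exists B => r [y' y'O <-]; apply: HB; apply: sub2.
have F0 : 0 <= F := le_trans (normr_ge0 _) (Fub x xOh).
have qnMb : forall y, Om y -> qn y <= Mb ^+ 2.
  move=> y Oy; rewrite -enorm_sq; have := HMb y Oy; have := enorm_ge0 y; nra.
have Sq : forall v, v \in S -> qn v = 1.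
  by move=> v vS; rewrite -enorm_sq Sunit // expr1n.
have Sn : S != [::].
  pose e := delta_mx ord0 (Ordinal d0) : 'rV[R]_d.
  have qe : qn e = 1.
    rewrite /qn (bigD1 (Ordinal d0)) //= mxE !eqxx /= expr1n big1 ?addr0 // => i.
    by rewrite mxE eqxx /= => /negbTE ->; rewrite expr0n.
  have ne : enorm e = 1 by rewrite /enorm -/(qn e) qe sqrtr1.
  have [w wS _] := Sdense e ne.
  by move: wS; case: (S).
have hmesh : forall T, T \in M -> forall i j, enorm (T i - T j) <= h.
  move=> T TM i j; rewrite hE /meshsize.
  have H1 := @le_bigmax_seq _ _ _ M 0 T xpredT
    (fun T : simplex R d => \big[Num.max/0]_(i < d.+1) \big[Num.max/0]_(j < d.+1) enorm (T i - T j)) TM isT.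
  apply: le_trans H1; rewrite /=.
  have H2 := @le_bigmax_seq _ _ _ (index_enum 'I_d.+1) 0 i xpredT
    (fun i => \big[Num.max/0]_(j < d.+1) enorm (T i - T j)) (mem_index_enum i) isT.
  apply: le_trans H2; rewrite /=.
  exact: (@le_bigmax_seq _ _ _ (index_enum 'I_d.+1) 0 j xpredT
    (fun j => enorm (T i - T j)) (mem_index_enum j) isT).
have hdiam : h <= 2 * Mb.
  apply: (le_trans he); apply: (le_trans ed); apply: ge_sup.
    by exists (enorm (x0 - x0)), x0, x0.
  move=> r [a [b [Oa [Ob ->]]]].
  have := qn_add2 a (- b); rewrite qnN -enorm_sq.
  have := qnMb a Oa; have := qnMb b Ob; have := enorm_ge0 (a - b); nra.
have Geo : forall z, NhI Om M eps z -> qn z <= P /\ forall v, v \in S -> exists T, T \in M /\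
      exists l, barycentric l /\ z + eps *: v = \sum_i l i *: T i /\ (forall i, qn (T i) <= P).
  move=> z [zN [Oz dz]]; split.
    by have := qnMb z Oz; rewrite /P; have := sqr_ge0 Mb; lra.
  have bd_ne : exists b, bdry Om b.
    apply: contrapT => nb; move: dz; rewrite /dist_bdry.
    have -> : [set enorm (z - y) | y in bdry Om] = set0.
      apply/seteqP; split => r // [y yb _]; exfalso; apply: nb; by exists y.
    rewrite inf0; lra.
  have dzb : forall b, bdry Om b -> dist_bdry Om z <= enorm (z - b).
    move=> b bb; apply: ge_inf; last by exists b.
    by exists 0 => r [y _ <-]; exact: enorm_ge0.
  move=> v vS; set y := z + eps *: v.
  have Oy : Om y.
    apply: seg_in oO Oz _ => t t0 t1 bb.
    have := dzb _ bb.
    have te0 : 0 <= t * eps by rewrite mulr_ge0 // ltW.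
    have := enorm_addZ (z - (z + t *: (eps *: v))) v (t * eps) (Sq v vS) te0.
    rewrite scalerA opprD addrA subrr add0r addNr enorm0.
    have : t * eps <= eps by rewrite ler_piMl // ltW.
    lra.
  have dy : h < dist_bdry Om y.
    apply: (lt_le_trans _ (lb_le_inf _ _)).
    - have : h < dist_bdry Om z - eps by lra.
      exact.
    - by case: bd_ne => b bb; exists (enorm (y - b)), b.
    - move=> r [b bb <-]; rewrite /y addrAC.
      have := enorm_addZ (z - b) v eps (Sq v vS) (ltW eps0); have := dzb b bb; lra.
  have yOh : Om_h M y := sub1 y (conj Oy dy).
  have [T [TM [l [bl [_ ye]]]]] := interior_subset yOh.
  exists T; split => //; exists l; split => //; split; first exact: ye.
  move=> i.
  have Hti : T i - y = \sum_j l j *: (T i - T j).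
    apply/esym; under eq_bigr => j _ do rewrite scalerBr.
    by rewrite sumrB -scaler_suml bl.2 scale1r ye.
  have H1 := qn_add2 y (T i - y); rewrite addrC subrK in H1.
  have H2 : qn (T i - y) <= h ^+ 2.
    rewrite Hti; apply: le_trans (qn_jensen l (fun j => T i - T j) bl) _.
    apply: (@le_trans _ _ (\sum_j l j * h ^+ 2)).
      apply: ler_sum => j _; apply: ler_wpM2l; first exact: bl.1.
      rewrite -enorm_sq; have := hmesh T TM i j; have := enorm_ge0 (T i - T j); nra.
    by rewrite -mulr_suml bl.2 mul1r.
  have := qnMb y Oy; rewrite /P; nra.
have Gb : forall z, z \in nodes M -> ~ NhI Om M eps z -> `|gt eps z| <= G.
  move=> z zN nz; apply: (@le_bigmax_seq _ _ _ (nodes M) 0 z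
    (fun z => z \notin NhI Om M eps) (fun z => `|gt eps z|) zN).
  by apply/negP; rewrite in_setE.
have bnd : forall e, 0 < e -> `|u x| <= G + (F + e) * P.
  move=> e e0; set c := F + e.
  have c0 : 0 < c by rewrite /c; lra.
  have ub : forall U : 'rV[R]_d -> R, Vh M U ->
      (forall z, NhI Om M eps z -> disc_inf_lap M hat eps S U z < c) ->
      (forall z, z \in nodes M -> ~ NhI Om M eps z -> U z <= G) -> U x <= G + c * P.
    move=> U VU HU HbU.
    have hn := @core R d Om M hat eps S U c G P hb eps0 c0 P0 Sq Ssym Sn Geo HU HbU.
    have [T [TM [l [bl [_ xe]]]]] := interior_subset xOh.
    rewrite xe (VU T TM l bl).
    apply: (@le_trans _ _ (\sum_i l i * (G + c * P))).
      apply: ler_sum => i _; apply: ler_wpM2l; first exact: bl.1.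
      exact: hn (node_mem M T i TM).
    by rewrite -mulr_suml bl.2 mul1r.
  have fz : forall z, NhI Om M eps z -> `|f z| < c.
    move=> z [zN zI]; apply: (le_lt_trans (Fub z _)); last by rewrite /c; lra.
    apply: sub1; case: zI => Oz dz; split => //; lra.
  have ubd : forall z, z \in nodes M -> ~ NhI Om M eps z -> u z = gt eps z.
    by move=> z zN nz; apply: Hbd; split.
  rewrite ler_norml; apply/andP; split.
    rewrite lerNl; apply: (ub (fun y => - u y)).
    - by move=> T TM l bl; rewrite (Vu T TM l bl) -sumrN; apply: eq_bigr => i _; rewrite mulrN.
    - move=> z zI; rewrite disc_opp Heq //; have := fz z zI; rewrite ltr_norml.
      by case/andP => H _; rewrite ltrNl.
    - move=> z zN nz; rewrite ubd //; apply: le_trans (Gb z zN nz).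
      by rewrite -normrN ler_norm.
  apply: ub => //.
  - move=> z zI; rewrite Heq //; exact: le_lt_trans (ler_norm _) (fz z zI).
  - move=> z zN nz; rewrite ubd //; apply: le_trans (Gb z zN nz); exact: ler_norm.
apply/ler_addgt0Pr => e e0.
have P1 : 0 < P + 1 by lra.
have := bnd (e / (P + 1)) (divr_gt0 e0 P1).
have : e / (P + 1) * P <= e.
  by rewrite mulrAC ler_pdivrMr //; nra.
lra.
Qed.
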